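(* Let $\mathcal{L}_1,\mathcal{L}_2$ be objects of $\mathbf{Cal^0_{Sym}}$ that are DAC-lattices, and let $f\in\mathbf{Cal^0_{Sym}}(\mathcal{L}_1,\mathcal{L}_2^{\mathrm{op}})$ be such that $f(\mathcal{L}_1)$ has length $2$. Then the coatom $X:=\bigcup\{\{p\}\times\Sigma[f(p)]\,;\,p\in\Sigma_1\}$ of $\mathcal{L}_1\circledast\mathcal{L}_2$ (where $f(p)$ is regarded as an element of $\mathcal{L}_2$) is a $\ast$-coatom, i.e. there exist distinct coatoms $x_1,y_1$ of $\mathcal{L}_1$, distinct coatoms $x_2,y_2$ of $\mathcal{L}_2$ and a bijection $h:\Sigma'[x_1\wedge y_1]\to\Sigma'[x_2\wedge y_2]$ such that $X=\bigcup\{\Sigma[z]\times\Sigma[h(z)];z\in\Sigma'[x_1\wedge y_1]\}$.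
   Context: Lattice notation: $\Sigma_i,\Sigma_i'$ atoms and coatoms; $\Sigma[a]$ atoms below $a$, $\Sigma'[a]$ coatoms above $a$; $\mathsf{Cl}(\omega)=\{\Sigma[a];a\in\omega\}$; $\mathcal{L}^{\mathrm{op}}$ the dual lattice; $f^\circ(b):=\bigvee\{a;f(a)\le b\}$. A DAC-lattice is a lattice with $0,1$ such that $\mathcal{L}$ and $\mathcal{L}^{\mathrm{op}}$ are atomistic with the covering property. $\mathbf{Cal^0_{Sym}}$: objects are complete atomistic coatomistic lattices with $\Sigma[x]\cup\Sigma[y]\ne\Sigma$ for all coatoms $x,y$ and $\Sigma'[p]\cup\Sigma'[q]\ne\Sigma'$ for all atoms $p,q$; arrows preserve arbitrary joins, send atoms to atoms or $0$, with $f^\circ$ sending coatoms to coatoms or $1$. $\Sigma'_\circledast$ is the set of $R\subsetneqq\Sigma_1\times\Sigma_2$ such that for all $(p_1,p_2)$, $\{q_1;(q_1,p_2)\in R\}\in\mathsf{Cl}(\Sigma_1'\cup\{1\})$ and $\{q_2;(p_1,q_2)\in R\}\in\mathsf{Cl}(\Sigma_2'\cup\{1\})$; $\mathcal{L}_1\circledast\mathcal{L}_2:=\{\bigcap\omega;\omega\subseteq\Sigma'_\circledast\cup\{\Sigma_1\times\Sigma_2\}\}$. The length of a subset is the supremum of lengths of its chains (a chain $c_0<\dots<c_n$ has length $n$). *)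

(* Defs.v *)
Set Implicit Arguments.

Section LatticeNotions.
Variable T : Type.
Variable le : T -> T -> Prop.

Definition dual : T -> T -> Prop := fun a b => le b a.

Definition partial_order : Prop :=
  (forall a, le a a) /\ (forall a b c, le a b -> le b c -> le a c) /\
  (forall a b, le a b -> le b a -> a = b).

Definition lt (a b : T) : Prop := le a b /\ a <> b.

Definition is_lub (S : T -> Prop) (s : T) : Prop :=
  (forall x, S x -> le x s) /\ (forall y, (forall x, S x -> le x y) -> le s y).

Definition complete : Prop := forall S : T -> Prop, exists s, is_lub S s.

Definition bottom (b : T) : Prop := forall x, le b x.
Definition top (t : T) : Prop := forall x, le x t.
Definition has_bottom_top : Prop := (exists b, bottom b) /\ (exists t, top t).

Definition atom (p : T) : Prop :=
  ~ bottom p /\ forall q, le q p -> bottom q \/ q = p.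

Definition covers (a b : T) : Prop :=
  lt a b /\ forall c, le a c -> le c b -> c = a \/ c = b.

Definition atomistic : Prop :=
  forall a, is_lub (fun p => atom p /\ le p a) a.

Definition pair_set (a b : T) : T -> Prop := fun x => x = a \/ x = b.

Definition covering_property : Prop :=
  forall p a j, atom p -> ~ le p a -> is_lub (pair_set a p) j -> covers a j.

Definition has_chain (A : T -> Prop) (n : nat) : Prop :=
  exists c : nat -> T, (forall i, i <= n -> A (c i)) /\
                       (forall i, i < n -> lt (c i) (c (S i))).

Definition length_eq (S : T -> Prop) (n : nat) : Prop :=
  has_chain S n /\ forall m, has_chain S m -> m <= n.

End LatticeNotions.

Definition coatom (T : Type) (le : T -> T -> Prop) := atom (dual le).

Definition DAC (T : Type) (le : T -> T -> Prop) : Prop :=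
  partial_order le /\ (forall a b, exists j, is_lub le (pair_set a b) j) /\
  (forall a b, exists m, is_lub (dual le) (pair_set a b) m) /\
  has_bottom_top le /\
  atomistic le /\ covering_property le /\
  atomistic (dual le) /\ covering_property (dual le).

Definition Cal0Sym_obj (T : Type) (le : T -> T -> Prop) : Prop :=
  partial_order le /\ complete le /\ atomistic le /\ atomistic (dual le) /\
  (forall x y, coatom le x -> coatom le y ->
     exists p, atom le p /\ ~ le p x /\ ~ le p y) /\
  (forall p q, atom le p -> atom le q ->
     exists x, coatom le x /\ ~ le p x /\ ~ le q x).

Definition image (T1 T2 : Type) (f : T1 -> T2) (S : T1 -> Prop) : T2 -> Prop :=
  fun y => exists x, S x /\ y = f x.

(* arrows of Cal^0_Sym from (T1,le1) to (T2,le2);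
   f°(b) := \/ {a ; f a <= b}, required to be a coatom or 1 for every coatom b *)
Definition Cal0Sym_arrow (T1 T2 : Type) (le1 : T1 -> T1 -> Prop)
  (le2 : T2 -> T2 -> Prop) (f : T1 -> T2) : Prop :=
  (forall S s, is_lub le1 S s -> is_lub le2 (image f S) (f s)) /\
  (forall p, atom le1 p -> atom le2 (f p) \/ bottom le2 (f p)) /\
  (forall b c, coatom le2 b -> is_lub le1 (fun a => le2 (f a) b) c ->
     coatom le1 c \/ top le1 c).

(* Main.v *)
Require Import Defs.
From Stdlib Require Import Classical Lia.

Lemma coat_nt (T : Type) (le : T -> T -> Prop) x : coatom le x -> ~ top le x.
Proof. intros [H _]; exact H. Qed.

Lemma coat_up (T : Type) (le : T -> T -> Prop) x y :
  coatom le x -> le x y -> top le y \/ y = x.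
Proof. intros [_ H] Hxy; exact (H y Hxy). Qed.

Lemma coat_nle (T : Type) (le : T -> T -> Prop) x y :
  coatom le x -> coatom le y -> x <> y -> ~ le x y.
Proof.
  intros Hx Hy Hne Hxy. destruct (coat_up _ _ _ _ Hx Hxy) as [H|H].
  - exact (coat_nt _ _ _ Hy H).
  - apply Hne; symmetry; exact H.
Qed.

Lemma Lcov (T : Type) (le : T -> T -> Prop)
  (meet : forall a b, exists m, is_lub (dual le) (pair_set a b) m)
  (dcov : covering_property (dual le)) x y m w :
  coatom le x -> coatom le y -> x <> y -> is_lub (dual le) (pair_set x y) m ->
  coatom le w -> le m w -> covers le m w.
Proof.
  intros Hx Hy Hne Hm Hw Hmw.
  assert (Cx : covers le m x).
  { destruct (dcov y x m Hy (coat_nle _ _ _ _ Hx Hy Hne) Hm) as [[A B] C].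
    split. split. exact A. intro E; apply B; symmetry; exact E.
    intros c H1 H2. destruct (C c H2 H1) as [E|E]; [right|left]; exact E. }
  destruct (classic (w = x)) as [E|E]. { subst w; exact Cx. }
  destruct (meet w x) as [j Hj].
  destruct (dcov x w j Hx (coat_nle _ _ _ _ Hw Hx E) Hj) as [[A B] C].
  assert (Hmj : le m j).
  { destruct Hj as [_ V]. apply V. intros z [-> | ->]. exact Hmw.
    destruct Hm as [U _]. apply U. left; reflexivity. }
  assert (Hjx : le j x). { destruct Hj as [U _]. apply U. right; reflexivity. }
  destruct Cx as [_ Cx]. destruct (Cx j Hmj Hjx) as [Ej|Ej].
  - subst j. split. split. exact Hmw. intro E'; apply B; symmetry; exact E'.
    intros c H1 H2. destruct (C c H2 H1) as [E'|E']; [right|left]; exact E'.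
  - subst j. exfalso. destruct (coat_up _ _ _ _ Hx A) as [H|H].
    + exact (coat_nt _ _ _ Hw H).
    + exact (E H).
Qed.

Theorem lemma8p2 (T1 T2 : Type) (le1 : T1 -> T1 -> Prop) (le2 : T2 -> T2 -> Prop)
  (f : T1 -> T2) :
  Cal0Sym_obj le1 -> Cal0Sym_obj le2 -> DAC le1 -> DAC le2 ->
  Cal0Sym_arrow le1 (dual le2) f ->
  length_eq (dual le2) (image f (fun _ => True)) 2 ->
  exists (x1 y1 : T1) (x2 y2 : T2) (m1 : T1) (m2 : T2) (h : T1 -> T2),
    coatom le1 x1 /\ coatom le1 y1 /\ x1 <> y1 /\
    coatom le2 x2 /\ coatom le2 y2 /\ x2 <> y2 /\
    is_lub (dual le1) (pair_set x1 y1) m1 /\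
    is_lub (dual le2) (pair_set x2 y2) m2 /\
    (* h is a bijection  Sigma'[x1 /\ y1] -> Sigma'[x2 /\ y2] *)
    (forall z, coatom le1 z -> le1 m1 z -> coatom le2 (h z) /\ le2 m2 (h z)) /\
    (forall z z', coatom le1 z -> le1 m1 z -> coatom le1 z' -> le1 m1 z' ->
        h z = h z' -> z = z') /\
    (forall w, coatom le2 w -> le2 m2 w ->
        exists z, coatom le1 z /\ le1 m1 z /\ h z = w) /\
    (* X = \bigcup { Sigma[z] x Sigma[h z] ; z in Sigma'[x1 /\ y1] } *)
    (forall p q,
       (atom le1 p /\ atom le2 q /\ le2 q (f p)) <->
       (exists z, coatom le1 z /\ le1 m1 z /\
          atom le1 p /\ le1 p z /\ atom le2 q /\ le2 q (h z))).
Proof.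
intros HO1 HO2 HD1 HD2 Harr Hlen.
destruct HO1 as [po1 [cmp1 [at1 [dat1 _]]]].
destruct HO2 as [po2 [cmp2 [at2 [dat2 _]]]].
destruct po1 as [refl1 [trans1 anti1]].
destruct po2 as [refl2 [trans2 anti2]].
destruct HD1 as [_ [join1 [meet1 [[[b1 Hb1] [t1 Ht1]] [_ [_ [_ dcov1]]]]]]].
destruct HD2 as [_ [join2 [meet2 [_ [_ [_ [_ dcov2]]]]]]].
destruct Harr as [Hlub [Hat Hco]].
destruct Hlen as [Hch Hmax].
assert (mono : forall a b, le1 a b -> le2 (f b) (f a)).
{ intros a b Hab.
  assert (L : is_lub le1 (pair_set a b) b).
  { split. intros x [-> | ->]; auto. intros y Hy. apply Hy. right; reflexivity. }
  destruct (Hlub _ _ L) as [U _]. apply (U (f a)). exists a. split; [left; reflexivity | reflexivity]. }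
assert (glb2 : forall a b j, is_lub le1 (pair_set a b) j -> le2 (f j) (f a) /\ le2 (f j) (f b) /\
   forall y, le2 y (f a) -> le2 y (f b) -> le2 y (f j)).
{ intros a b j L. destruct (Hlub _ _ L) as [U V]. split; [|split].
  - apply U. exists a. split; [left|]; reflexivity.
  - apply U. exists b. split; [right|]; reflexivity.
  - intros y ya yb. apply V. intros x [x0 [[-> | ->] ->]]; assumption. }
assert (glbA : forall a y, (forall p, atom le1 p -> le1 p a -> le2 y (f p)) -> le2 y (f a)).
{ intros a y Hy. destruct (Hlub _ _ (at1 a)) as [_ V]. apply V.
  intros x [p [[Hp Hpa] ->]]. apply Hy; assumption. }
assert (Hfb : top le2 (f b1)).
{ assert (L : is_lub le1 (fun _ => False) b1). { split. intros x []. intros y _. apply Hb1. }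
  destruct (Hlub _ _ L) as [_ V]. intros y. apply V. intros x [x0 [[] _]]. }
assert (monoT : forall a, le2 (f t1) (f a)). { intro a. apply mono. apply Ht1. }
assert (HatC : forall p, atom le1 p -> coatom le2 (f p) \/ top le2 (f p)).
{ intros p Hp. exact (Hat p Hp). }
assert (E : forall a, top le2 (f a) \/ coatom le2 (f a) \/ f a = f t1).
{ intro a. destruct (classic (top le2 (f a))) as [|Hnt]; [left; assumption|right].
  assert (Hex : exists p, atom le1 p /\ le1 p a /\ ~ top le2 (f p)).
  { apply NNPP; intros Hn. apply Hnt. intros y. apply glbA. intros p Hp Hpa.
    destruct (classic (top le2 (f p))) as [Ht|Ht]. apply Ht. exfalso; apply Hn; exists p; auto. }
  destruct Hex as [p [Hp [Hpa Hnt']]].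
  destruct (HatC p Hp) as [Hc|Ht]; [|contradiction].
  destruct (classic (f a = f p)) as [Ea|Ea]. left; rewrite Ea; exact Hc.
  destruct (classic (f a = f t1)) as [E'|E']. right; exact E'.
  exfalso.
  assert (Hc3 : has_chain (dual le2) (image f (fun _ => True)) 3).
  { exists (fun i => match i with 0 => f b1 | 1 => f p | 2 => f a | _ => f t1 end). split.
    - intros i _. destruct i as [|[|[|i]]]; eexists; split; try exact I; reflexivity.
    - intros i Hi. destruct i as [|[|[|i]]]; [| | | lia]; split; unfold dual; simpl.
      + apply Hfb.
      + intro Heq. apply (coat_nt _ _ _ Hc). rewrite <- Heq. exact Hfb.
      + apply mono; assumption.
      + intro Heq; apply Ea; symmetry; assumption.
      + apply monoT.
      + exact E'. }
  specialize (Hmax 3 Hc3). lia. }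
assert (HX2 : exists x2 y2, coatom le2 x2 /\ coatom le2 y2 /\ x2 <> y2 /\
          is_lub (dual le2) (pair_set x2 y2) (f t1)).
{ destruct Hch as [c [Hin Hlt]].
  destruct (Hin 0 ltac:(lia)) as [a0 [_ E0]].
  destruct (Hin 1 ltac:(lia)) as [a1 [_ E1]].
  destruct (Hin 2 ltac:(lia)) as [a2 [_ E2]].
  destruct (Hlt 0 ltac:(lia)) as [L01 N01].
  destruct (Hlt 1 ltac:(lia)) as [L12 N12].
  unfold dual in L01, L12.
  rewrite E0, E1 in L01, N01. rewrite E1, E2 in L12, N12.
  assert (Hx2 : coatom le2 (f a1)).
  { destruct (E a1) as [Ht|[Hc|Ht]].
    - exfalso. apply N01. apply anti2; [apply Ht | exact L01].
    - exact Hc.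
    - exfalso. apply N12. apply anti2; [rewrite Ht; apply monoT | exact L12]. }
  destruct (classic (exists p, atom le1 p /\ ~ top le2 (f p) /\ f p <> f a1)) as [[p' [Hp' [Hnt Hne]]] | Hn].
  - exists (f a1), (f p').
    assert (Hy2 : coatom le2 (f p')). { destruct (HatC p' Hp') as [H|H]; [exact H|contradiction]. }
    destruct (join1 a1 p') as [j Hj].
    destruct (glb2 _ _ _ Hj) as [G1 [G2 G3]].
    assert (Ej : f j = f t1).
    { destruct (E j) as [Ht|[Hc|Ht]].
      - exfalso. apply (coat_nt _ _ _ Hx2). intro y. apply trans2 with (f j); [apply Ht|exact G1].
      - exfalso. destruct (coat_up _ _ _ _ Hc G1) as [H|H]. exact (coat_nt _ _ _ Hx2 H).
        destruct (coat_up _ _ _ _ Hc G2) as [H'|H']. exact (coat_nt _ _ _ Hy2 H').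
        apply Hne. rewrite H, H'. reflexivity.
      - exact Ht. }
    split; [exact Hx2|split; [exact Hy2|split]].
    + intro H; apply Hne; symmetry; exact H.
    + split.
      * intros x [-> | ->]; unfold dual; rewrite <- Ej; assumption.
      * intros y Hy. unfold dual. rewrite <- Ej. apply G3; apply Hy; [left|right]; reflexivity.
  - exfalso.
    assert (H1 : le2 (f a1) (f t1)).
    { apply glbA. intros p Hp _.
      destruct (classic (top le2 (f p))) as [Ht|Ht]. apply Ht.
      destruct (classic (f p = f a1)) as [Ep|Ep]. rewrite Ep; apply refl2.
      exfalso; apply Hn; exists p; auto. }
    apply N12. apply anti2; [apply trans2 with (f t1); [exact H1|apply monoT] | exact L12]. }
destruct HX2 as [x2 [y2 [Hx2 [Hy2 [Hxy2 Hm2]]]]].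
assert (noxy : ~ le2 x2 y2). { exact (coat_nle _ _ _ _ Hx2 Hy2 Hxy2). }
assert (m2x : le2 (f t1) x2). { destruct Hm2 as [U _]. apply U. left; reflexivity. }
assert (m2y : le2 (f t1) y2). { destruct Hm2 as [U _]. apply U. right; reflexivity. }
assert (m2nt : ~ top le2 (f t1)).
{ intro Ht. apply noxy. apply trans2 with (f t1); [apply Ht|exact m2y]. }
assert (m2nc : ~ coatom le2 (f t1)).
{ intro Hc. destruct (coat_up _ _ _ _ Hc m2x) as [H|H]. exact (coat_nt _ _ _ Hx2 H).
  apply noxy. rewrite H. exact m2y. }
assert (Q : forall e, ~ le2 e (f t1) -> exists q, atom le2 q /\ le2 q e /\ ~ le2 q (f t1)).
{ intros e He. apply NNPP; intro Hn. apply He. destruct (at2 e) as [_ V]. apply V.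
  intros x [Hx Hxe]. apply NNPP; intro Hxm. apply Hn. exists x; auto. }
assert (nlmC : forall c, coatom le2 c -> ~ le2 c (f t1)).
{ intros c Hc H. destruct (coat_up _ _ _ _ Hc H) as [H'|H']. exact (m2nt H').
  apply m2nc. rewrite H'. exact Hc. }
assert (nlm : forall p, atom le1 p -> ~ le2 (f p) (f t1)).
{ intros p Hp H. destruct (HatC p Hp) as [Hc|Ht]. exact (nlmC _ Hc H).
  apply m2nt. intro y. apply trans2 with (f p); [apply Ht|exact H]. }
assert (N : forall z, coatom le1 z -> ~ top le2 (f z)).
{ intros z Hz Htz.
  assert (Hr : exists r, atom le1 r /\ ~ le1 r z).
  { apply NNPP; intro Hn. apply (coat_nt _ _ _ Hz). intros y.
    destruct (at1 t1) as [_ V]. apply trans1 with t1. apply Ht1. apply V.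
    intros x [Hx _]. apply NNPP; intro Hxz; apply Hn; exists x; auto. }
  destruct Hr as [r [Hr Hrz]].
  destruct (join1 z r) as [j Hj].
  assert (Hzj : le1 z j). { destruct Hj as [U _]. apply U. left; reflexivity. }
  assert (Hrj : le1 r j). { destruct Hj as [U _]. apply U. right; reflexivity. }
  destruct (coat_up _ _ _ _ Hz Hzj) as [Ht|Ej].
  - destruct (glb2 _ _ _ Hj) as [_ [_ G3]].
    apply (nlm r Hr). apply trans2 with (f j).
    + apply G3; [apply Htz | apply refl2].
    + apply mono. apply Ht.
  - apply Hrz. rewrite <- Ej. exact Hrj. }
assert (Lc2 : forall w, coatom le2 w -> le2 (f t1) w -> covers le2 (f t1) w).
{ intros w Hw Hmw. exact (Lcov _ _ meet2 dcov2 _ _ _ _ Hx2 Hy2 Hxy2 Hm2 Hw Hmw). }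
assert (S : forall c w q, coatom le2 c -> coatom le2 w -> le2 (f t1) c -> le2 (f t1) w ->
   atom le2 q -> le2 q c -> le2 q w -> ~ le2 q (f t1) -> c = w).
{ intros c w q Hc Hw Hmc Hmw Hq Hqc Hqw Hqm.
  destruct (classic (c = w)) as [|Ne]; [assumption|exfalso].
  destruct (meet2 c w) as [u [U V]].
  assert (Hmu : le2 (f t1) u). { apply V. intros x [-> | ->]; assumption. }
  assert (Huw : le2 u w). { apply U. right; reflexivity. }
  assert (Huc : le2 u c). { apply U. left; reflexivity. }
  destruct (Lc2 w Hw Hmw) as [_ C]. destruct (C u Hmu Huw) as [Eu|Eu].
  - apply Hqm. rewrite <- Eu. apply V. intros x [-> | ->]; assumption.
  - rewrite Eu in Huc. destruct (coat_up _ _ _ _ Hw Huc) as [H|H].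
    exact (coat_nt _ _ _ Hc H). exact (Ne H). }
assert (ZQ : forall q, atom le2 q -> ~ le2 q (f t1) -> exists z, coatom le1 z /\
   coatom le2 (f z) /\ le2 q (f z) /\ (forall a, le2 q (f a) -> le1 a z)).
{ intros q Hq Hqm. destruct (cmp1 (fun a => le2 q (f a))) as [z Hz].
  assert (Z1 : le2 q (f z)).
  { destruct (Hlub _ _ Hz) as [_ V]. apply V. intros x [a [Ha ->]]. exact Ha. }
  assert (Z3 : coatom le1 z).
  { destruct (Hco q z Hq Hz) as [H|H]. exact H. exfalso. apply Hqm.
    apply trans2 with (f z). exact Z1. apply mono. apply H. }
  exists z. split; [exact Z3|split;[|split]].
  - destruct (E z) as [H|[H|H]]. exfalso; exact (N z Z3 H). exact H.
    exfalso; apply Hqm; rewrite <- H; exact Z1.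
  - exact Z1.
  - intros a Ha. destruct Hz as [U _]. apply U. exact Ha. }
assert (HZ : forall c, coatom le2 c -> le2 (f t1) c -> exists z, coatom le1 z /\ f z = c /\
   (exists q, atom le2 q /\ ~ le2 q (f t1) /\ forall a, le2 q (f a) -> le1 a z)).
{ intros c Hc Hmc. destruct (Q c (nlmC c Hc)) as [q [Hq [Hqc Hqm]]].
  destruct (ZQ q Hq Hqm) as [z [Hz [Hfz [Hqz Zup]]]].
  exists z. split; [exact Hz|split].
  - apply (S _ _ q Hfz Hc (monoT z) Hmc Hq Hqz Hqc Hqm).
  - exists q; auto. }
destruct (HZ x2 Hx2 m2x) as [x1 [Hx1 [Ex1 _]]].
destruct (HZ y2 Hy2 m2y) as [y1 [Hy1 [Ey1 _]]].
assert (Hxy1 : x1 <> y1). { intro H; apply Hxy2; rewrite <- Ex1, <- Ey1, H; reflexivity. }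
destruct (meet1 x1 y1) as [m1 Hm1].
assert (m1x : le1 m1 x1). { destruct Hm1 as [U _]. apply U. left; reflexivity. }
assert (m1y : le1 m1 y1). { destruct Hm1 as [U _]. apply U. right; reflexivity. }
assert (Ha : forall p, atom le1 p -> le1 p m1 -> top le2 (f p)).
{ intros p Hp Hpm.
  assert (H1 : le2 x2 (f p)). { rewrite <- Ex1. apply mono. apply trans1 with m1; assumption. }
  assert (H2 : le2 y2 (f p)). { rewrite <- Ey1. apply mono. apply trans1 with m1; assumption. }
  destruct (HatC p Hp) as [Hc|Ht]; [|exact Ht].
  destruct (coat_up _ _ _ _ Hx2 H1) as [H|H]; [exact H|].
  destruct (coat_up _ _ _ _ Hy2 H2) as [H'|H']; [exact H'|].
  exfalso; apply Hxy2. rewrite <- H, <- H'. reflexivity. }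
assert (Z4 : forall q z, (forall a, le2 q (f a) -> le1 a z) -> le1 m1 z).
{ intros q z Zup. destruct (at1 m1) as [_ V]. apply V. intros p [Hp Hpm].
  apply Zup. apply (Ha p Hp Hpm). }
assert (Lc1 : forall w, coatom le1 w -> le1 m1 w -> covers le1 m1 w).
{ intros w Hw Hmw. exact (Lcov _ _ meet1 dcov1 _ _ _ _ Hx1 Hy1 Hxy1 Hm1 Hw Hmw). }
assert (Hb : forall z, coatom le1 z -> le1 m1 z -> coatom le2 (f z)).
{ intros z Hz Hmz.
  assert (Hex : exists p, atom le1 p /\ le1 p z /\ ~ top le2 (f p)).
  { apply NNPP; intros Hn. apply (N z Hz). intros y. apply glbA. intros p Hp Hpa.
    destruct (classic (top le2 (f p))) as [Ht|Ht]. apply Ht. exfalso; apply Hn; exists p; auto. }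
  destruct Hex as [p [Hp [Hpz Hnt]]].
  destruct (Q (f p) (nlm p Hp)) as [q [Hq [Hqp Hqm]]].
  destruct (ZQ q Hq Hqm) as [x' [Hx' [Hfx' [Hqx' Zup]]]].
  assert (Hpx' : le1 p x'). { apply Zup. exact Hqp. }
  assert (Hmx' : le1 m1 x'). { exact (Z4 q x' Zup). }
  destruct (meet1 z x') as [u [U V]].
  assert (Hmu : le1 m1 u). { apply V. intros x [-> | ->]; assumption. }
  assert (Hpu : le1 p u). { apply V. intros x [-> | ->]; assumption. }
  assert (Hux : le1 u x'). { apply U. right; reflexivity. }
  assert (Huz : le1 u z). { apply U. left; reflexivity. }
  destruct (Lc1 x' Hx' Hmx') as [_ C]. destruct (C u Hmu Hux) as [Eu|Eu].
  - exfalso. apply Hnt. apply Ha; [exact Hp|]. rewrite <- Eu. exact Hpu.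
  - rewrite Eu in Huz. destruct (coat_up _ _ _ _ Hx' Huz) as [H|H].
    + exfalso; exact (coat_nt _ _ _ Hz H).
    + rewrite H. exact Hfx'. }
exists x1, y1, x2, y2, m1, (f t1), f.
split; [exact Hx1|]. split; [exact Hy1|]. split; [exact Hxy1|].
split; [exact Hx2|]. split; [exact Hy2|]. split; [exact Hxy2|].
split; [exact Hm1|]. split; [exact Hm2|].
split.
{ intros z Hz Hmz. split; [apply Hb; assumption | apply monoT]. }
split.
{ intros z z' Hz Hmz Hz' Hmz' Ef.
  destruct (Q (f z) (nlmC _ (Hb z Hz Hmz))) as [q [Hq [Hqz Hqm]]].
  destruct (ZQ q Hq Hqm) as [w [Hw [_ [_ Zup]]]].
  destruct (coat_up _ _ _ _ Hz (Zup z Hqz)) as [H|H]. exfalso; exact (coat_nt _ _ _ Hw H).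
  destruct (coat_up _ _ _ _ Hz' (Zup z' ltac:(rewrite <- Ef; exact Hqz))) as [H'|H'].
  exfalso; exact (coat_nt _ _ _ Hw H').
  rewrite <- H, <- H'. reflexivity. }
split.
{ intros w Hw Hmw. destruct (HZ w Hw Hmw) as [z [Hz [Ez [q [_ [_ Zup]]]]]].
  exists z. split; [exact Hz|split; [exact (Z4 q z Zup)|exact Ez]]. }
intros p q. split.
- intros [Hp [Hq Hqf]].
  destruct (Q (f p) (nlm p Hp)) as [q' [Hq' [Hq'p Hq'm]]].
  destruct (classic (le2 q (f t1))) as [Hqm|Hqm].
  + destruct (ZQ q' Hq' Hq'm) as [z [Hz [_ [_ Zup]]]].
    exists z. split; [exact Hz|]. split; [exact (Z4 q' z Zup)|]. split; [exact Hp|].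
    split; [apply Zup; exact Hq'p|]. split; [exact Hq|].
    apply trans2 with (f t1); [exact Hqm|apply monoT].
  + destruct (ZQ q Hq Hqm) as [z [Hz [_ [Hqz Zup]]]].
    exists z. split; [exact Hz|]. split; [exact (Z4 q z Zup)|]. split; [exact Hp|].
    split; [apply Zup; exact Hqf|]. split; [exact Hq|exact Hqz].
- intros [z [Hz [Hmz [Hp [Hpz [Hq Hqz]]]]]].
  split; [exact Hp|]. split; [exact Hq|].
  apply trans2 with (f z); [exact Hqz|apply mono; exact Hpz].
Qed.
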